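(* Let $N\in\mathbb{N}$ with $N\ge3$ and $\phi(x):=\cot\left(\frac{\pi}{2}\left(\frac{x}{\sqrt6}+\frac12\right)\right)$. There is an odd polynomial $P_{\mathrm{odd}}$ such that for all real $x$ with $|x|\le\frac12$, \[ \left|\phi(x)-\sum_{m=0}^{N+1}\frac{\phi^{(2m)}(0)}{(2m)!}x^{2m}-P_{\mathrm{odd}}(x)\right|\le 2.3\left(\frac23\right)^{N+2}x^{2N+4}. \] *)

(* Defs.v *)
From Stdlib Require Import Reals.
From Coquelicot Require Import Coquelicot.
Open Scope R_scope.

Definition cot (y : R) : R := cos y / sin y.

Definition phi (x : R) : R := cot ((PI / 2) * (x / sqrt 6 + 1 / 2)).

Definition even_taylor (N : nat) (x : R) : R :=
  sum_f_R0 (fun m => Derive_n phi (2 * m) 0 / INR (Stdlib.Arith.Factorial.fact (2 * m)) * x ^ (2 * m)) (N + 1).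

Definition odd_poly (d : nat) (c : nat -> R) (x : R) : R :=
  sum_f_R0 (fun k => c k * x ^ (2 * k + 1)) d.

(* Main.v *)
Require Import Defs.
From Stdlib Require Import Reals Lra Lia Factorial.
From Coquelicot Require Import Coquelicot.
Open Scope R_scope.

Fixpoint a (k j : nat) : R :=
  match k with
  | O => if Nat.eqb j 1 then 1 else 0
  | S k' => INR (S j) * a k' (S j) +
            match j with O => 0 | S j' => INR j' * a k' j' end
  end.

Definition ev (k : nat) (c : R) : R := sum_f_R0 (fun j => a k j * c ^ j) (S k).

Lemma a_nonneg : forall k j, 0 <= a k j.
Proof.
  induction k; intros j; cbn [a].
  - destruct j as [|[|j]]; simpl; lra.
  - assert (0 <= INR (S j) * a k (S j)) by (apply Rmult_le_pos; [apply pos_INR|apply IHk]).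
    destruct j; [lra|].
    assert (0 <= INR j * a k j) by (apply Rmult_le_pos; [apply pos_INR|apply IHk]). lra.
Qed.

Lemma a_zero : forall k j, (S k < j)%nat -> a k j = 0.
Proof.
  induction k; intros j Hj; cbn [a].
  - destruct j as [|[|j]]; [lia|lia|reflexivity].
  - rewrite (IHk (S j)) by lia. destruct j; [lia|].
    rewrite (IHk j) by lia. ring.
Qed.

Lemma a_lead : forall k, a k (S k) = INR (fact k).
Proof.
  induction k; cbn [a].
  - reflexivity.
  - rewrite (a_zero k (S (S (S k)))) by lia. rewrite IHk.
    change (fact (S k)) with (S k * fact k)%nat. rewrite mult_INR. ring.
Qed.

Lemma ev0 : forall c, ev 0 c = c.
Proof. intros c. unfold ev. simpl. ring. Qed.

Lemma ev_nonneg : forall k c, 0 <= c -> 0 <= ev k c.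
Proof.
  intros k c Hc. unfold ev. apply cond_pos_sum. intros j.
  apply Rmult_le_pos; [apply a_nonneg| apply pow_le; exact Hc].
Qed.

Lemma ev_mono : forall k c d, 0 <= c -> c <= d -> ev k c <= ev k d.
Proof.
  intros k c d Hc Hcd. unfold ev. apply sum_Rle. intros j _.
  apply Rmult_le_compat_l; [apply a_nonneg|]. apply pow_incr; lra.
Qed.

Lemma is_derive_sum_pow (p : nat -> R) M c :
  is_derive (fun x => sum_f_R0 (fun j => p j * x ^ j) M) c
            (sum_f_R0 (fun j => p j * (INR j * c ^ (pred j))) M).
Proof.
  induction M; cbn [sum_f_R0].
  - apply is_derive_scal. replace (INR 0 * c ^ pred 0) with (INR 0 * 1 * c ^ pred 0) by ring.
    apply (is_derive_pow (fun x => x) 0 c 1). apply (@is_derive_id R_AbsRing).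
  - apply (is_derive_plus (fun x => sum_f_R0 (fun j => p j * x ^ j) M) (fun x => p (S M) * x ^ S M)).
    exact IHM. apply is_derive_scal.
    replace (INR (S M) * c ^ pred (S M)) with (INR (S M) * 1 * c ^ pred (S M)) by ring.
    apply (is_derive_pow (fun x => x) (S M) c 1). apply (@is_derive_id R_AbsRing).
Qed.

Lemma L1 (p : nat -> R) M c :
  sum_f_R0 (fun j => INR (S j) * p (S j) * c ^ j) M =
  sum_f_R0 (fun j => p j * (INR j * c ^ (pred j))) (S M).
Proof.
  induction M.
  - simpl. ring.
  - rewrite tech5, IHM. rewrite (tech5 _ (S M)). simpl pred. ring.
Qed.

Definition mshift (p : nat -> R) (j : nat) : R :=
  match j with O => 0 | S j' => INR j' * p j' end.

Lemma L2 (p : nat -> R) M c :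
  sum_f_R0 (fun j => mshift p j * c ^ j) (S M) =
  sum_f_R0 (fun j => p j * (INR j * c ^ (pred j)) * c ^ 2) M.
Proof.
  induction M.
  - simpl. ring.
  - rewrite tech5, IHM. rewrite (tech5 _ M). simpl. ring.
Qed.

Lemma ev_deriv : forall k c,
  sum_f_R0 (fun j => a k j * (INR j * c ^ (pred j))) (S k) * (1 + c ^ 2) = ev (S k) c.
Proof.
  intros k c. unfold ev.
  transitivity (sum_f_R0 (fun j => INR (S j) * a k (S j) * c ^ j) (S (S k)) +
                sum_f_R0 (fun j => mshift (a k) j * c ^ j) (S (S k))).
  - rewrite L1, L2. rewrite (tech5 _ (S (S k))), (tech5 _ (S k)).
    rewrite (a_zero k (S (S (S k)))) by lia. rewrite (a_zero k (S (S k))) by lia.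
    rewrite Rmult_plus_distr_l, Rmult_1_r. rewrite <- scal_sum. ring.
  - rewrite <- plus_sum. apply sum_eq. intros j _. simpl. unfold mshift. ring.
Qed.

Lemma is_derive_ev_comp (g : R -> R) x sg k :
  is_derive g x (sg * (1 + g x ^ 2)) ->
  is_derive (fun y => ev k (g y)) x (sg * ev (S k) (g x)).
Proof.
  intros Hg. rewrite <- ev_deriv.
  replace (sg * (sum_f_R0 (fun j => a k j * (INR j * g x ^ pred j)) (S k) * (1 + g x ^ 2)))
    with (scal (sg * (1 + g x ^ 2)) (sum_f_R0 (fun j => a k j * (INR j * g x ^ pred j)) (S k))).
  2:{ unfold scal; simpl; unfold mult; simpl. ring. }
  apply (is_derive_comp (fun c => ev k c) g x). unfold ev. apply is_derive_sum_pow. exact Hg.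
Qed.

Lemma locally_interval (lo hi x : R) : lo < x < hi -> locally x (fun y => lo < y < hi).
Proof.
  intros [H1 H2].
  assert (He : 0 < Rmin (x - lo) (hi - x)) by (apply Rmin_pos; lra).
  exists (mkposreal _ He). intros y Hy. simpl in Hy. unfold ball in Hy; simpl in Hy.
  unfold AbsRing_ball, abs, minus, plus, opp in Hy; simpl in Hy.
  apply Rabs_lt_between in Hy.
  assert (Rmin (x - lo) (hi - x) <= x - lo) by apply Rmin_l.
  assert (Rmin (x - lo) (hi - x) <= hi - x) by apply Rmin_r. lra.
Qed.

Lemma Dn_gen (f : R -> R) (g : nat -> R -> R) (lo hi : R) :
  (forall x, lo < x < hi -> f x = g 0%nat x) ->
  (forall k x, lo < x < hi -> is_derive (g k) x (g (S k) x)) ->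
  forall k x, lo < x < hi -> Derive_n f k x = g k x /\ ex_derive_n f k x.
Proof.
  intros H0 HD k. induction k; intros x Hx.
  - simpl. split; [apply H0; exact Hx| exact I].
  - assert (Hloc : locally x (fun t => g k t = Derive_n f k t)).
    { apply filter_imp with (2 := locally_interval lo hi x Hx).
      intros y Hy. symmetry. apply IHk. exact Hy. }
    split.
    + simpl. rewrite <- (Derive_ext_loc _ _ x Hloc). apply is_derive_unique. apply HD. exact Hx.
    + simpl. apply ex_derive_ext_loc with (1 := Hloc). eexists. apply HD. exact Hx.
Qed.

Lemma is_derive_cot x : sin x <> 0 -> is_derive cot x (-1 * (1 + cot x ^ 2)).
Proof.
  intros Hs. unfold cot.
  replace (-1 * (1 + (cos x / sin x) ^ 2)) with ((- sin x * sin x - cos x * cos x) / sin x ^ 2).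
  - apply is_derive_div; try apply is_derive_cos; try apply is_derive_sin; try exact Hs.
  - assert (sin x ^ 2 + cos x ^ 2 = 1) by (rewrite <- (sin2_cos2 x); unfold Rsqr; ring).
    field. exact Hs.
Qed.

Lemma is_derive_tan' x : cos x <> 0 -> is_derive tan x (1 * (1 + tan x ^ 2)).
Proof. intros Hc. replace (1 * (1 + tan x ^ 2)) with (tan x ^ 2 + 1) by ring. apply is_derive_tan; exact Hc. Qed.

Definition gtan (k : nat) (v : R) : R := ev k (tan v).

Lemma gtan_derive k v : - (PI/2) < v < PI/2 -> is_derive (gtan k) v (gtan (S k) v).
Proof.
  intros Hv. unfold gtan. replace (ev (S k) (tan v)) with (1 * ev (S k) (tan v)) by ring.
  apply is_derive_ev_comp. apply is_derive_tan'.
  assert (0 < cos v) by (apply cos_gt_0; lra). lra.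
Qed.

Lemma Dn_tan k v : - (PI/2) < v < PI/2 -> Derive_n tan k v = gtan k v /\ ex_derive_n tan k v.
Proof.
  apply (Dn_gen tan gtan (-(PI/2)) (PI/2)).
  - intros x _. unfold gtan. rewrite ev0. reflexivity.
  - intros; apply gtan_derive; assumption.
Qed.

Definition bf (t : R) : R := cot t - / t.
Definition gb (k : nat) (t : R) : R := (-1) ^ k * (ev k (cot t) - INR (fact k) / t ^ (S k)).

Lemma sin_pos_0PI t : 0 < t < PI -> 0 < sin t.
Proof. intros H. apply sin_gt_0; lra. Qed.

Lemma is_derive_cot_ev k t : 0 < t < PI -> is_derive (fun s => ev k (cot s)) t (-1 * ev (S k) (cot t)).
Proof.
  intros Ht. apply is_derive_ev_comp. apply is_derive_cot.
  assert (0 < sin t) by (apply sin_pos_0PI; exact Ht). lra.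
Qed.

Lemma is_derive_invpow k t : t <> 0 ->
  is_derive (fun s => INR (fact k) / s ^ (S k)) t (- INR (fact (S k)) / t ^ (S (S k))).
Proof.
  intros Ht.
  assert (H := is_derive_inv (fun s => s ^ (S k)) t (INR (S k) * 1 * t ^ pred (S k))).
  assert (Hp : is_derive (fun s => s ^ (S k)) t (INR (S k) * 1 * t ^ pred (S k))).
  { apply (is_derive_pow (fun x => x)). apply (@is_derive_id R_AbsRing). }
  specialize (H Hp (pow_nonzero _ _ Ht)).
  apply (is_derive_scal _ _ (INR (fact k))) in H.
  unfold Rdiv. replace (- INR (fact (S k)) * / t ^ S (S k))
    with (INR (fact k) * (- (INR (S k) * 1 * t ^ pred (S k)) / (t ^ S k) ^ 2)).
  - exact H.
  - change (fact (S k)) with (S k * fact k)%nat. rewrite mult_INR. simpl pred.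
    change (t ^ S (S k)) with (t * (t * t ^ k)). change (t ^ S k) with (t * t ^ k).
    assert (t ^ k <> 0) by (apply pow_nonzero; exact Ht).
    field. split; assumption.
Qed.

Lemma gb_derive k t : 0 < t < PI -> is_derive (gb k) t (gb (S k) t).
Proof.
  intros Ht. unfold gb.
  assert (Ht0 : t <> 0) by lra.
  assert (H := is_derive_minus _ _ t _ _ (is_derive_cot_ev k t Ht) (is_derive_invpow k t Ht0)).
  apply (is_derive_scal _ _ ((-1) ^ k)) in H.
  replace ((-1) ^ S k * (ev (S k) (cot t) - INR (fact (S k)) / t ^ S (S k)))
    with ((-1) ^ k * minus (-1 * ev (S k) (cot t)) (- INR (fact (S k)) / t ^ S (S k))).
  - exact H.
  - unfold minus, plus, opp; simpl. unfold Rdiv. ring.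
Qed.

Lemma Dn_b k t : 0 < t < PI -> Derive_n bf k t = gb k t /\ ex_derive_n bf k t.
Proof.
  apply (Dn_gen bf gb 0 PI).
  - intros x Hx. unfold bf, gb. rewrite ev0. simpl. field. lra.
  - intros; apply gb_derive; assumption.
Qed.

Lemma INR_fact_S n : INR (fact (S n)) = INR (S n) * INR (fact n).
Proof. change (fact (S n)) with (S n * fact n)%nat. apply mult_INR. Qed.

Ltac evalapprox := cbn [sum_f_R0 Nat.mul Nat.add pow];
  rewrite ?INR_fact_S; cbn [fact INR]; field.

Lemma sin_lb_eq a : sin_lb a = a - a^3/6 + a^5/120 - a^7/5040.
Proof. unfold sin_lb, sin_approx, sin_term. evalapprox. Qed.
Lemma cos_lb_eq a : cos_lb a = 1 - a^2/2 + a^4/24 - a^6/720.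
Proof. unfold cos_lb, cos_approx, cos_term. evalapprox. Qed.
Lemma cos_ub_eq a : cos_ub a = 1 - a^2/2 + a^4/24 - a^6/720 + a^8/40320.
Proof. unfold cos_ub, cos_approx, cos_term. evalapprox. Qed.

Lemma PI_gt3 : 3 < PI.
Proof. assert (H := PI2_3_2). lra. Qed.

Lemma is_derive_half (h : R -> R) t d :
  is_derive h (t / 2) d -> is_derive (fun s => h (s / 2)) t (/ 2 * d).
Proof.
  intros H. replace (/ 2 * d) with (scal (/ 2) d) by reflexivity.
  apply (is_derive_comp h (fun s => s / 2)). exact H.
  auto_derive; [exact I| ring].
Qed.

Lemma is_derive_lin3 (A B C : R -> R) a b c t dA dB dC :
  is_derive A t dA -> is_derive B t dB -> is_derive C t dC ->
  is_derive (fun s => a * A s + b * B s + c * C s) t (a * dA + b * dB + c * dC).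
Proof.
  intros HA HB HC.
  apply (is_derive_plus (fun s => a * A s + b * B s) (fun s => c * C s)).
  apply (is_derive_plus (fun s => a * A s) (fun s => b * B s)).
  apply is_derive_scal; exact HA. apply is_derive_scal; exact HB. apply is_derive_scal; exact HC.
Qed.

Definition F (n : nat) (t : R) : R :=
  (-1) ^ n * ev n (cot t) + (- ((-1) ^ n * / 2 ^ (S n))) * ev n (cot (t / 2))
  + / 2 ^ (S n) * ev n (tan (t / 2)).

Lemma F_derive n t : 0 < t < PI -> is_derive (F n) t (F (S n) t).
Proof.
  intros Ht. assert (PG := PI_gt3).
  assert (H1 := is_derive_cot_ev n t Ht).
  assert (H2 : is_derive (fun s => ev n (cot (s / 2))) t (/ 2 * (-1 * ev (S n) (cot (t / 2))))).
  { apply (is_derive_half (fun s => ev n (cot s))). apply is_derive_cot_ev. lra. }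
  assert (H3 : is_derive (fun s => ev n (tan (s / 2))) t (/ 2 * ev (S n) (tan (t / 2)))).
  { apply (is_derive_half (fun s => ev n (tan s))). apply (gtan_derive n (t/2)). lra. }
  assert (H := is_derive_lin3 _ _ _ ((-1) ^ n) (- ((-1) ^ n * / 2 ^ (S n))) (/ 2 ^ (S n)) t _ _ _ H1 H2 H3).
  unfold F. replace ((-1) ^ S n * ev (S n) (cot t) + - ((-1) ^ S n * / 2 ^ S (S n)) * ev (S n) (cot (t / 2)) +
   / 2 ^ S (S n) * ev (S n) (tan (t / 2))) with
   ((-1) ^ n * (-1 * ev (S n) (cot t)) + - ((-1) ^ n * / 2 ^ S n) * (/ 2 * (-1 * ev (S n) (cot (t / 2)))) +
       / 2 ^ S n * (/ 2 * ev (S n) (tan (t / 2)))).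
  exact H.
  change (2 ^ S (S n)) with (2 * 2 ^ S n). change ((-1) ^ S n) with (-1 * (-1) ^ n).
  assert (2 ^ S n <> 0) by (apply pow_nonzero; lra). field. auto.
Qed.

Lemma cot_half t : 0 < t < PI -> cot t = / 2 * cot (t / 2) - / 2 * tan (t / 2).
Proof.
  intros Ht. assert (PG := PI_gt3).
  assert (Hs : 0 < sin (t / 2)) by (apply sin_gt_0; lra).
  assert (Hc : 0 < cos (t / 2)) by (apply cos_gt_0; lra).
  unfold cot, tan. replace t with (2 * (t / 2)) at 1 2 by field.
  rewrite sin_2a, cos_2a. field. lra.
Qed.

Lemma F_zero n : forall t, 0 < t < PI -> F n t = 0.
Proof.
  induction n; intros t Ht.
  - unfold F. rewrite !ev0. rewrite (cot_half t Ht). simpl. field.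
  - assert (Hl : locally t (fun s => 0 = F n s)).
    { apply filter_imp with (2 := locally_interval 0 PI t Ht). intros y Hy. symmetry; apply IHn; exact Hy. }
    assert (H0 : is_derive (F n) t 0).
    { apply (is_derive_ext_loc (fun _ => 0)). exact Hl. apply (@is_derive_const R_AbsRing). }
    rewrite <- (is_derive_unique _ _ _ (F_derive n t Ht)). apply is_derive_unique. exact H0.
Qed.

Definition D (n : nat) (t : R) : R := ev n (cot t) - INR (fact n) / t ^ (S n).

Lemma D_rel n t : 0 < t < PI ->
  D n t = / 2 ^ (S n) * D n (t / 2) - (-1) ^ n * / 2 ^ (S n) * ev n (tan (t / 2)).
Proof.
  intros Ht. assert (H := F_zero n t Ht). unfold F in H. unfold D.
  assert (Hm : (-1) ^ n * (-1) ^ n = 1) by (rewrite <- Rpow_mult_distr; replace (-1 * -1) with 1 by ring; apply pow1).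
  assert (E : ev n (cot t) = / 2 ^ (S n) * ev n (cot (t / 2)) - (-1) ^ n * / 2 ^ (S n) * ev n (tan (t / 2))).
  { apply (Rmult_eq_reg_l ((-1) ^ n)). 2:{ apply pow_nonzero; lra. }
    transitivity ((-1)^n * / 2 ^ S n * ev n (cot (t / 2)) - ((-1)^n * (-1)^n) * / 2 ^ S n * ev n (tan (t / 2))).
    - rewrite Hm. lra.
    - ring. }
  rewrite E.
  replace ((t / 2) ^ (S n)) with (t ^ (S n) * / 2 ^ (S n)) by (unfold Rdiv; rewrite Rpow_mult_distr, pow_inv; reflexivity).
  assert (2 ^ S n <> 0) by (apply pow_nonzero; lra).
  assert (t ^ S n <> 0) by (apply pow_nonzero; lra).
  field. auto.
Qed.

Lemma w_bounds s : 0 < s <= 1 -> 1 - s ^ 2 <= s * cot s <= 1.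
Proof.
  intros Hs. assert (PG := PI_gt3).
  assert (Hsin : 0 < sin s) by (apply sin_gt_0; lra).
  assert (Hslt := sin_lt_x s (proj1 Hs)).
  destruct (SIN s) as [Hl _]; try lra. rewrite sin_lb_eq in Hl.
  destruct (COS s) as [Hcl Hcu]; try lra. rewrite cos_lb_eq in Hcl. rewrite cos_ub_eq in Hcu.
  unfold cot. split.
  - (* s cos s / sin s >= cos s >= 1 - s^2 *)
    assert (Hc0 : 1 - s^2 <= cos s).
    { assert (0 <= s^4/24 - s^6/720).
      { assert (s^6 <= s^4). { replace (s^6) with (s^4 * s^2) by ring.
          assert (0 <= s^4) by (apply pow_le; lra). assert (s^2 <= 1) by nra. nra. }
        assert (0 <= s^4) by (apply pow_le; lra). lra. }
      assert (0 <= s^2) by nra. lra. }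
    destruct (Rle_dec 0 (cos s)) as [Hc|Hc].
    + apply Rle_trans with (cos s); [exact Hc0|].
      apply (Rmult_le_reg_r (sin s)); [exact Hsin|].
      replace (s * (cos s / sin s) * sin s) with (s * cos s) by (field; lra). nra.
    + exfalso. assert (1 - s^2 >= 0) by nra. lra.
  - apply (Rmult_le_reg_r (sin s)); [exact Hsin|].
    replace (s * (cos s / sin s) * sin s) with (s * cos s) by (field; lra). rewrite Rmult_1_l.
    assert (s * cos s <= s * (1 - s^2/2 + s^4/24 - s^6/720 + s^8/40320)) by (apply Rmult_le_compat_l; lra).
    assert (s * (1 - s^2/2 + s^4/24 - s^6/720 + s^8/40320) <= s - s^3/6 + s^5/120 - s^7/5040).
    { assert (E : s - s^3/6 + s^5/120 - s^7/5040 - s * (1 - s^2/2 + s^4/24 - s^6/720 + s^8/40320)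
                = s^3 * (1/3 - s^2/30 + s^4/840 - s^6/40320)) by field.
      assert (0 < s^3) by (apply pow_lt; lra).
      assert (s^2 <= 1) by nra. assert (0 <= s^2) by nra.
      assert (s^6 <= 1) by (replace (s^6) with ((s^2)^3) by ring; rewrite <- (pow1 3); apply pow_incr; lra).
      assert (0 <= s^4) by (replace (s^4) with ((s^2)^2) by ring; nra).
      assert (0 < 1/3 - s^2/30 + s^4/840 - s^6/40320) by lra. nra. }
    lra.
Qed.

Lemma bern w m : 0 <= w <= 1 -> 1 - w ^ m <= INR m * (1 - w).
Proof.
  intros Hw. induction m.
  - simpl. lra.
  - rewrite S_INR. simpl.
    assert (w ^ m <= 1) by (rewrite <- (pow1 m); apply pow_incr; lra).
    assert (0 <= w ^ m) by (apply pow_le; lra). nra.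
Qed.

Lemma sum_le_last (f : nat -> R) n : (forall j, 0 <= f j) -> sum_f_R0 f n <= sum_f_R0 f (S n).
Proof. intros H. rewrite tech5. assert (0 <= f (S n)) by apply H. lra. Qed.

Lemma asym n s : 0 < s <= 1 ->
  Rabs (s ^ (S n) * ev n (cot s) - INR (fact n)) <= s * (INR (fact n) * INR (S n) + ev n 1).
Proof.
  intros Hs. destruct (w_bounds s Hs) as [Hw1 Hw2].
  set (w := s * cot s) in *.
  assert (Hw0 : 0 <= w) by nra.
  set (c := cot s).
  set (R0 := s ^ (S n) * sum_f_R0 (fun j => a n j * c ^ j) n).
  assert (Hsplit : s ^ (S n) * ev n c - INR (fact n) = R0 + INR (fact n) * (w ^ (S n) - 1)).
  { unfold R0, ev. rewrite tech5, a_lead. unfold w. rewrite Rpow_mult_distr. fold c. ring. }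
  assert (Hterm : forall j, (j <= n)%nat -> 0 <= a n j * c ^ j * s ^ (S n) <= a n j * s).
  { intros j Hj.
    replace (a n j * c ^ j * s ^ (S n)) with (a n j * (w ^ j * s ^ (S n - j))).
    2:{ unfold w. rewrite Rpow_mult_distr.
        assert (Hp : s ^ (S n) = s ^ j * s ^ (S n - j)) by (rewrite <- pow_add; f_equal; lia).
        rewrite Hp. fold c. ring. }
    assert (Ha := a_nonneg n j).
    assert (0 <= w ^ j <= 1) by (split; [apply pow_le; lra| rewrite <- (pow1 j); apply pow_incr; lra]).
    replace (S n - j)%nat with (S (n - j)) by lia. simpl pow.
    assert (0 <= s ^ (n - j) <= 1) by (split; [apply pow_le; lra| rewrite <- (pow1 (n-j)); apply pow_incr; lra]).
    split.
    - apply Rmult_le_pos; [lra|]. apply Rmult_le_pos; [lra|]. apply Rmult_le_pos; lra.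
    - apply Rmult_le_compat_l; [lra|].
      assert (s * s ^ (n - j) <= s) by nra.
      assert (0 <= s * s ^ (n - j)) by nra. nra. }
  assert (HR0 : 0 <= R0 <= s * sum_f_R0 (fun j => a n j) n).
  { unfold R0. rewrite !scal_sum. split.
    - apply Rle_trans with (sum_f_R0 (fun _ => 0) n).
      + rewrite sum_cte. lra.
      + apply sum_Rle. intros j Hj. assert (H := Hterm j Hj). lra.
    - apply sum_Rle. intros j Hj. assert (H := Hterm j Hj). lra. }
  assert (Hev1 : sum_f_R0 (fun j => a n j) n <= ev n 1).
  { unfold ev. rewrite tech5. assert (Ha := a_nonneg n (S n)).
    assert (sum_f_R0 (fun j => a n j * 1 ^ j) n = sum_f_R0 (fun j => a n j) n).
    { apply sum_eq. intros j _. rewrite pow1. ring. }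
    rewrite pow1. lra. }
  assert (Hb := bern w (S n) (conj Hw0 Hw2)).
  assert (Hwp : w ^ (S n) <= 1) by (rewrite <- (pow1 (S n)); apply pow_incr; lra).
  assert (Hf : 0 < INR (fact n)) by (apply lt_0_INR; apply lt_O_fact).
  fold c. rewrite Hsplit.
  assert (HS : 0 <= INR (S n)) by apply pos_INR.
  assert (Hs2 : s ^ 2 <= s) by (simpl; nra).
  assert (H1 : 1 - w ^ S n <= INR (S n) * s) by nra.
  assert (H2 : INR (fact n) * (1 - w ^ S n) <= INR (fact n) * (INR (S n) * s)) by (apply Rmult_le_compat_l; lra).
  assert (0 <= ev n 1) by (apply ev_nonneg; lra).
  apply Rabs_le. split; nra.
Qed.

Lemma E_mono n t : 0 < t < PI -> ev n (tan (t / 2 / 2)) <= ev n (tan (t / 2)).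
Proof.
  intros Ht. assert (PG := PI_gt3).
  apply ev_mono.
  - left. apply tan_gt_0; lra.
  - left. apply tan_increasing; lra.
Qed.

Lemma E_nonneg n t : 0 < t < PI -> 0 <= ev n (tan (t / 2)).
Proof. intros Ht. assert (PG := PI_gt3). apply ev_nonneg. left. apply tan_gt_0; lra. Qed.

Lemma q_bounds n : 0 < / 2 ^ (S n) <= / 2.
Proof.
  assert (H1 : 2 <= 2 ^ S n).
  { simpl. assert (1 <= 2 ^ n) by (rewrite <- (pow1 n); apply pow_incr; lra). lra. }
  split. apply Rinv_0_lt_compat. lra. apply Rinv_le_contravar; lra.
Qed.

Lemma D_step n t : 0 < t < PI ->
  Rabs (D n t) <= / 2 ^ (S n) * Rabs (D n (t / 2)) + / 2 ^ (S n) * ev n (tan (t / 2)).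
Proof.
  intros Ht. rewrite (D_rel n t Ht). destruct (q_bounds n) as [Hq _].
  assert (HE := E_nonneg n t Ht).
  eapply Rle_trans. apply Rabs_triang. rewrite Rabs_Ropp, !Rabs_mult, pow_1_abs.
  rewrite (Rabs_right (/ 2 ^ S n)) by lra. rewrite (Rabs_right (ev n (tan (t / 2)))) by lra. lra.
Qed.

Lemma iter n : forall J t, 0 < t < PI ->
  Rabs (D n t) <= (/ 2 ^ (S n)) ^ J * Rabs (D n (t / 2 ^ J)) + 2 * / 2 ^ (S n) * ev n (tan (t / 2)).
Proof.
  destruct (q_bounds n) as [Hq0 Hq1].
  induction J; intros t Ht.
  - replace (t / 2 ^ 0) with t by (simpl; field). assert (HE := E_nonneg n t Ht).
    assert (0 <= / 2 ^ S n * ev n (tan (t / 2))) by (apply Rmult_le_pos; lra). rewrite pow_O. lra.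
  - assert (Ht2 : 0 < t / 2 < PI) by lra.
    assert (IH := IHJ (t / 2) Ht2).
    replace (t / 2 / 2 ^ J) with (t / 2 ^ S J) in IH by (simpl; field; apply pow_nonzero; lra).
    assert (HS := D_step n t Ht). assert (HM := E_mono n t Ht).
    assert (HE := E_nonneg n t Ht). assert (HE2 := E_nonneg n (t/2) Ht2).
    set (q := / 2 ^ S n) in *. set (X := Rabs (D n (t / 2 ^ S J))) in *.
    set (E1 := ev n (tan (t / 2))) in *. set (E2 := ev n (tan (t / 2 / 2))) in *.
    simpl pow. fold q.
    assert (0 <= q ^ J * X) by (apply Rmult_le_pos; [apply pow_le; lra| apply Rabs_pos]).
    assert (q * Rabs (D n (t / 2)) <= q * (q ^ J * X + 2 * q * E2)) by (apply Rmult_le_compat_l; lra).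
    assert (2 * q * E2 <= E1) by nra.
    assert (q * (2 * q * E2) <= q * E1) by (apply Rmult_le_compat_l; lra).
    nra.
Qed.

Lemma MD n t : 0 < t < PI -> Rabs (D n t) <= 2 * / 2 ^ (S n) * ev n (tan (t / 2)).
Proof.
  intros Ht. set (B := 2 * / 2 ^ (S n) * ev n (tan (t / 2))).
  set (K := INR (fact n) * INR (S n) + ev n 1).
  assert (HK : 0 <= K).
  { unfold K. assert (0 <= ev n 1) by (apply ev_nonneg; lra).
    assert (0 <= INR (fact n) * INR (S n)) by (apply Rmult_le_pos; apply pos_INR). lra. }
  apply Rnot_lt_le. intros Hlt. set (eps := Rabs (D n t) - B).
  assert (Heps : 0 < eps) by (unfold eps; lra).
  assert (Htn : 0 < t ^ S n) by (apply pow_lt; lra).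
  destruct (Pow_x_infinity 2 ltac:(rewrite Rabs_right; lra) (Rmax t (K * t / (t ^ S n * eps)) + 1)) as [J HJ].
  specialize (HJ J (le_n J)). rewrite Rabs_right in HJ by (left; apply pow_lt; lra).
  assert (Hm1 := Rmax_l t (K * t / (t ^ S n * eps))).
  assert (Hm2 := Rmax_r t (K * t / (t ^ S n * eps))).
  set (P := 2 ^ J) in *.
  assert (HP : 0 < P) by (unfold P; apply pow_lt; lra).
  set (s := t / P).
  assert (Hs : 0 < s <= 1).
  { unfold s. split. apply Rdiv_lt_0_compat; lra.
    apply (Rmult_le_reg_r P); [lra|]. unfold Rdiv. rewrite Rmult_assoc, Rinv_l, Rmult_1_r; lra. }
  assert (HI := iter n J t Ht). fold P in HI. fold s in HI. fold B in HI.
  assert (Hsn : 0 < s ^ S n) by (apply pow_lt; lra).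
  assert (Hq : (/ 2 ^ S n) ^ J = / (2 ^ (S n * J))) by (rewrite pow_inv, pow_mult; reflexivity).
  assert (Hs2 : s ^ S n = t ^ S n / 2 ^ (S n * J)).
  { unfold s, P, Rdiv. rewrite Rpow_mult_distr, pow_inv, <- pow_mult, Nat.mul_comm. reflexivity. }
  assert (HD : (/ 2 ^ S n) ^ J * Rabs (D n s) = Rabs (s ^ S n * ev n (cot s) - INR (fact n)) / t ^ S n).
  { assert (HDs : D n s = (s ^ S n * ev n (cot s) - INR (fact n)) / s ^ S n) by (unfold D; field; lra).
    rewrite HDs. unfold Rdiv. rewrite Rabs_mult, Rabs_Rinv, (Rabs_right (s ^ S n)) by lra.
    rewrite Hq, Hs2. assert (0 < 2 ^ (S n * J)) by (apply pow_lt; lra). field. split; lra. }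
  assert (HA := asym n s Hs). fold K in HA.
  assert (Hlt2 : (/ 2 ^ S n) ^ J * Rabs (D n s) < eps).
  { rewrite HD. apply Rle_lt_trans with (s * K / t ^ S n).
    - unfold Rdiv. apply Rmult_le_compat_r; [left; apply Rinv_0_lt_compat; lra| exact HA].
    - unfold s. apply (Rmult_lt_reg_r (t ^ S n * P)); [apply Rmult_lt_0_compat; lra|].
      replace (t / P * K / t ^ S n * (t ^ S n * P)) with (K * t) by (field; lra).
      assert (H3 : K * t / (t ^ S n * eps) < P) by lra.
      apply (Rmult_lt_compat_r (t ^ S n * eps)) in H3; [|apply Rmult_lt_0_compat; lra].
      replace (K * t / (t ^ S n * eps) * (t ^ S n * eps)) with (K * t) in H3 by (field; lra).
      lra. }
  unfold eps in Hlt2. lra.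
Qed.

Lemma sum_ge_last (f : nat -> R) n : (forall j, 0 <= f j) -> f n <= sum_f_R0 f n.
Proof.
  intros H. destruct n. simpl; lra. rewrite tech5.
  assert (0 <= sum_f_R0 f n) by (apply cond_pos_sum; exact H). lra.
Qed.

Lemma tan_nonneg u : 0 <= u < PI / 2 -> 0 <= tan u.
Proof.
  intros [H1 H2]. destruct H1 as [H1|H1].
  - left. apply tan_gt_0; lra.
  - subst. rewrite tan_0. lra.
Qed.

Lemma TB n u h : 0 <= u -> 0 < h -> u + h < PI / 2 ->
  ev n (tan u) <= INR (fact n) * tan (u + h) / h ^ n.
Proof.
  intros Hu Hh Huh. assert (PG := PI_gt3).
  destruct (Taylor_Lagrange tan n u (u + h)) as [z [Hz E]].
  - lra.
  - intros t Ht k _. apply (Dn_tan k t). lra.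
  - replace (u + h - u) with h in E by ring.
    assert (Hsum : sum_f_R0 (fun m => h ^ m / INR (fact m) * Derive_n tan m u) n =
                   sum_f_R0 (fun m => h ^ m / INR (fact m) * ev m (tan u)) n).
    { apply sum_eq. intros m _. rewrite (proj1 (Dn_tan m u ltac:(lra))). reflexivity. }
    rewrite Hsum, (proj1 (Dn_tan (S n) z ltac:(lra))) in E. unfold gtan in E.
    assert (Ht0 : 0 <= tan u) by (apply tan_nonneg; lra).
    assert (Htz : 0 <= tan z) by (apply tan_nonneg; lra).
    assert (Hpos : forall m, 0 <= h ^ m / INR (fact m) * ev m (tan u)).
    { intros m. apply Rmult_le_pos. apply Rdiv_le_0_compat. apply pow_le; lra. apply lt_0_INR, lt_O_fact.
      apply ev_nonneg; exact Ht0. }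
    assert (Hlast := sum_ge_last _ n Hpos).
    assert (Hrem : 0 <= h ^ S n / INR (fact (S n)) * ev (S n) (tan z)).
    { apply Rmult_le_pos. apply Rdiv_le_0_compat. apply pow_le; lra. apply lt_0_INR, lt_O_fact.
      apply ev_nonneg; exact Htz. }
    assert (Hf : 0 < INR (fact n)) by apply lt_0_INR, lt_O_fact.
    assert (Hhn : 0 < h ^ n) by (apply pow_lt; lra).
    assert (HH : h ^ n / INR (fact n) * ev n (tan u) <= tan (u + h)) by lra.
    apply (Rmult_le_reg_l (h ^ n / INR (fact n))). apply Rdiv_lt_0_compat; lra.
    replace (h ^ n / INR (fact n) * (INR (fact n) * tan (u + h) / h ^ n)) with (tan (u + h)) by (field; lra).
    exact HH.
Qed.

Definition bm (z : R) : R := bf (- z).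
Definition gm (k : nat) (z : R) : R := (-1) ^ k * gb k (- z).

Lemma Dn_bm k z : - PI < z < 0 -> Derive_n bm k z = gm k z /\ ex_derive_n bm k z.
Proof.
  apply (Dn_gen bm gm (-PI) 0).
  - intros x Hx. unfold bm, gm. simpl. rewrite Rmult_1_l. exact (proj1 (Dn_b 0 (-x) ltac:(lra))).
  - intros j x Hx. unfold gm.
    replace ((-1) ^ S j * gb (S j) (- x)) with ((-1) ^ j * (scal (-1) (gb (S j) (- x)))).
    2:{ unfold scal; simpl; unfold mult; simpl. ring. }
    apply is_derive_scal. apply (is_derive_comp (gb j) (fun w => - w)).
    + apply gb_derive. lra.
    + replace (-1) with (opp (one : R)) by (unfold opp, one; simpl; ring).
      apply (is_derive_opp (fun z : R => z)). apply (@is_derive_id R_AbsRing).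
Qed.

Lemma sum_zero_pow (g : nat -> R) n : sum_f_R0 (fun m => 0 ^ m / INR (fact m) * g m) n = g 0%nat.
Proof. induction n. simpl. field. rewrite tech5, IHn. rewrite pow_i by lia. unfold Rdiv. ring. Qed.

Lemma TLb n x y : 0 < x < PI -> 0 < y < PI -> exists z, Rmin x y <= z <= Rmax x y /\
  bf y = sum_f_R0 (fun m => (y - x) ^ m / INR (fact m) * gb m x) n
         + (y - x) ^ (S n) / INR (fact (S n)) * gb (S n) z.
Proof.
  intros Hx Hy. destruct (Rtotal_order x y) as [Hlt|[Heq|Hgt]].
  - destruct (Taylor_Lagrange bf n x y Hlt) as [z [Hz E]].
    + intros t Ht k _. apply (Dn_b k t). lra.
    + exists z. split. rewrite Rmin_left, Rmax_right by lra. lra.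
      rewrite E, (proj1 (Dn_b (S n) z ltac:(lra))). f_equal.
      apply sum_eq. intros m _. rewrite (proj1 (Dn_b m x Hx)). reflexivity.
  - subst y. exists x. split. rewrite Rmin_left, Rmax_left by lra. lra.
    rewrite Rminus_diag, sum_zero_pow, pow_i by lia. rewrite <- (proj1 (Dn_b 0 x Hx)). simpl Derive_n. unfold Rdiv. ring.
  - destruct (Taylor_Lagrange bm n (-x) (-y) ltac:(lra)) as [z [Hz E]].
    + intros t Ht k _. apply (Dn_bm k t). lra.
    + exists (- z). split. rewrite Rmin_right, Rmax_left by lra. lra.
      change (bm (- y)) with (bf (- - y)) in E. rewrite Ropp_involutive in E. rewrite E.
      rewrite (proj1 (Dn_bm (S n) z ltac:(lra))). unfold gm. f_equal.
      * apply sum_eq. intros m _. rewrite (proj1 (Dn_bm m (-x) ltac:(lra))). unfold gm.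
        rewrite Ropp_involutive.
        replace ((y - x) ^ m) with ((- y - - x) ^ m * (-1) ^ m). field. apply INR_fact_neq_0.
        rewrite <- Rpow_mult_distr. f_equal. ring.
      * replace ((y - x) ^ S n) with ((- y - - x) ^ S n * (-1) ^ S n). field. apply INR_fact_neq_0.
        rewrite <- Rpow_mult_distr. f_equal. ring.
Qed.

Lemma split_sum (f : nat -> R) M :
  sum_f_R0 (fun m => f (2 * m)%nat) M + sum_f_R0 (fun m => f (2 * m + 1)%nat) M = sum_f_R0 f (2 * M + 1).
Proof.
  induction M.
  - simpl. ring.
  - rewrite !tech5. replace (2 * S M + 1)%nat with (S (S (2 * M + 1))) by lia.
    rewrite (tech5 f (S (2 * M + 1))), (tech5 f (2 * M + 1)). rewrite <- IHM.
    replace (2 * S M)%nat with (S (2 * M + 1)) by lia.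
    replace (S (2 * M + 1) + 1)%nat with (S (S (2 * M + 1))) by lia. ring.
Qed.

Lemma geom tau t m : tau <> 0 -> t <> 0 ->
  / t - sum_f_R0 (fun k => (tau - t) ^ k / tau ^ (S k)) m = ((tau - t) / tau) ^ (S m) / t.
Proof.
  intros H1 H2. induction m.
  - simpl. field. split; assumption.
  - rewrite tech5. replace (/ t - (sum_f_R0 (fun k => (tau - t) ^ k / tau ^ S k) m + (tau - t) ^ S m / tau ^ S (S m)))
      with ((/ t - sum_f_R0 (fun k => (tau - t) ^ k / tau ^ S k) m) - (tau - t) ^ S m / tau ^ S (S m)) by ring.
    rewrite IHm. unfold Rdiv. rewrite !Rpow_mult_distr, !pow_inv.
    assert (tau ^ S m <> 0) by (apply pow_nonzero; exact H1).
    change (tau ^ S (S m)) with (tau * tau ^ S m). change ((tau - t) ^ S (S m)) with ((tau - t) * (tau - t) ^ S m).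
    field. repeat split; assumption.
Qed.

Definition alpha : R := PI / (2 * sqrt 6).
Definition T (x : R) : R := PI / 2 * (x / sqrt 6 + 1 / 2).
Definition gphi (k : nat) (x : R) : R := alpha ^ k * (-1) ^ k * ev k (cot (T x)).

Lemma s6_facts : 2.449 < sqrt 6 /\ sqrt 6 * sqrt 6 = 6.
Proof.
  assert (H6 : sqrt 6 * sqrt 6 = 6) by (apply sqrt_sqrt; lra).
  assert (H0 : 0 <= sqrt 6) by apply sqrt_pos.
  split; [nra|exact H6].
Qed.

Lemma T_eq x : T x = PI / 4 + alpha * x.
Proof. unfold T, alpha. destruct s6_facts. field. lra. Qed.

Lemma T_range x : -1 < x < 1 -> 0 < T x < PI.
Proof.
  intros Hx. rewrite T_eq. unfold alpha. destruct s6_facts as [H1 H2]. assert (PG := PI_gt3).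
  assert (Ha : 0 < PI / (2 * sqrt 6) < PI / 4).
  { split. apply Rdiv_lt_0_compat; lra.
    apply Rmult_lt_reg_r with (2 * sqrt 6 * 4). lra.
    replace (PI / (2 * sqrt 6) * (2 * sqrt 6 * 4)) with (4 * PI) by (field; lra).
    replace (PI / 4 * (2 * sqrt 6 * 4)) with (2 * sqrt 6 * PI) by field. nra. }
  split; nra.
Qed.

Lemma Dn_phi k x : -1 < x < 1 -> Derive_n phi k x = gphi k x.
Proof.
  intros Hx. refine (proj1 (Dn_gen phi gphi (-1) 1 _ _ k x Hx)).
  - intros y Hy. unfold gphi, phi. rewrite ev0. simpl. unfold T. ring.
  - intros j y Hy. unfold gphi.
    assert (HT : is_derive T y alpha).
    { unfold T, alpha. destruct s6_facts. auto_derive. lra. field. lra. }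
    assert (Hs : 0 < sin (T y)) by (apply sin_gt_0; apply T_range; exact Hy).
    assert (HC := is_derive_comp (fun c => ev j (cot c)) T y _ _ (is_derive_cot_ev j (T y) (T_range y Hy)) HT).
    apply (is_derive_scal _ _ (alpha ^ j * (-1) ^ j)) in HC.
    replace (alpha ^ S j * (-1) ^ S j * ev (S j) (cot (T y))) with
      (alpha ^ j * (-1) ^ j * scal alpha (-1 * ev (S j) (cot (T y)))).
    + exact HC.
    + unfold scal; simpl; unfold mult; simpl. ring.
Qed.

Lemma tan_bound5 v : PI / 4 <= v -> v <= PI / 2 - 0.22 -> tan v <= 5.
Proof.
  intros H1 H2. assert (PG := PI_gt3).
  set (d := PI / 2 - v).
  assert (Hv : v = PI / 2 - d) by (unfold d; ring).
  assert (Hsd : 0.2 <= sin d).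
  { apply Rle_trans with (sin 0.22).
    - destruct (SIN 0.22) as [Hl _]; try lra. rewrite sin_lb_eq in Hl. simpl in Hl. lra.
    - apply sin_incr_1; unfold d; lra. }
  unfold tan. rewrite Hv, sin_shift, cos_shift.
  assert (Hc := COS_bound d).
  apply (Rmult_le_reg_r (sin d)). lra.
  replace (cos d / sin d * sin d) with (cos d) by (field; lra). lra.
Qed.

Lemma pow_ge_small (y : R) m k : 0 <= y <= 1 -> (k <= m)%nat -> y ^ m <= y ^ k.
Proof.
  intros Hy Hkm. replace m with (k + (m - k))%nat by lia. rewrite pow_add.
  assert (0 <= y ^ k) by (apply pow_le; lra).
  assert (y ^ (m - k) <= 1) by (rewrite <- (pow1 (m - k)); apply pow_incr; lra).
  assert (0 <= y ^ (m - k)) by (apply pow_le; lra). nra.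
Qed.

Theorem lemma3p4 (N : nat) (HN : (3 <= N)%nat) :
  exists (d : nat) (c : nat -> R),
    forall x : R, Rabs x <= 1 / 2 ->
      Rabs (phi x - even_taylor N x - odd_poly d c x)
        <= (23 / 10) * (2 / 3) ^ (N + 2) * x ^ (2 * N + 4).
Proof.
  exists (N + 1)%nat, (fun k => Derive_n phi (2 * k + 1) 0 / INR (fact (2 * k + 1))).
  intros x Hx.
  destruct s6_facts as [Hs6 Hs66]. assert (PG := PI_gt3).
  assert (Hs0 : sqrt 6 <> 0) by lra.
  apply Rabs_le_between in Hx.
  set (f := fun k => Derive_n phi k 0 / INR (fact k) * x ^ k).
  assert (Hsum : even_taylor N x + odd_poly (N + 1) (fun k => Derive_n phi (2 * k + 1) 0 / INR (fact (2 * k + 1))) x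
                 = sum_f_R0 f (2 * N + 3)).
  { replace (2 * N + 3)%nat with (2 * (N + 1) + 1)%nat by lia. rewrite <- split_sum. reflexivity. }
  set (tau := PI / 4). set (t := T x).
  assert (Hx1 : -1 < x < 1) by lra.
  assert (Ht : 0 < t < PI) by (apply T_range; exact Hx1).
  assert (Htau : 0 < tau < PI) by (unfold tau; lra).
  assert (Htx : t - tau = alpha * x) by (unfold t, tau; rewrite T_eq; ring).
  assert (HT0 : T 0 = tau) by (rewrite T_eq; unfold tau; ring).
  assert (Hf : forall k, f k = (t - tau) ^ k / INR (fact k) * gb k tau + (tau - t) ^ k / tau ^ (S k)).
  { intros k. unfold f. rewrite Dn_phi by lra. unfold gphi, gb. rewrite HT0.
    replace (tau - t) with ((-1) * (alpha * x)) by lra. rewrite Htx.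
    rewrite !Rpow_mult_distr.
    assert (INR (fact k) <> 0) by apply INR_fact_neq_0.
    assert (tau ^ S k <> 0) by (apply pow_nonzero; lra).
    field. split; assumption. }
  assert (Hsum2 : sum_f_R0 f (2 * N + 3) =
     sum_f_R0 (fun k => (t - tau) ^ k / INR (fact k) * gb k tau) (2 * N + 3) +
     sum_f_R0 (fun k => (tau - t) ^ k / tau ^ (S k)) (2 * N + 3)).
  { rewrite <- plus_sum. apply sum_eq. intros k _. apply Hf. }
  destruct (TLb (2 * N + 3) tau t Htau Ht) as [z [Hz Eb]].
  assert (Hgeo := geom tau t (2 * N + 3) ltac:(lra) ltac:(lra)).
  assert (Hphi : phi x = bf t + / t) by (unfold bf, phi, t, T; ring).
  assert (EQ : phi x - even_taylor N x - odd_poly (N + 1) (fun k => Derive_n phi (2 * k + 1) 0 / INR (fact (2 * k + 1))) x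
     = (t - tau) ^ S (2 * N + 3) / INR (fact (S (2 * N + 3))) * gb (S (2 * N + 3)) z
       + ((tau - t) / tau) ^ S (2 * N + 3) / t).
  { replace (phi x - even_taylor N x - odd_poly (N + 1) (fun k => Derive_n phi (2 * k + 1) 0 / INR (fact (2 * k + 1))) x)
      with (phi x - (even_taylor N x + odd_poly (N + 1) (fun k => Derive_n phi (2 * k + 1) 0 / INR (fact (2 * k + 1))) x)) by ring.
    rewrite Hsum, Hsum2, Hphi, Eb, <- Hgeo. ring. }
  rewrite EQ. clear EQ Eb Hgeo Hsum Hsum2 Hf.
  set (r := / sqrt 6).
  assert (Hr : 0 < r < 0.40834).
  { unfold r. split. apply Rinv_0_lt_compat; lra.
    apply Rlt_trans with (/ 2.449). apply Rinv_lt_contravar; lra. lra. }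
  assert (Hal : alpha = PI * r / 2). { unfold alpha, r. field. exact Hs0. }
  assert (Hal2 : alpha ^ 2 = PI ^ 2 / 24).
  { unfold alpha. replace 24 with (4 * (sqrt 6 * sqrt 6)) by (rewrite Hs66; ring). field. exact Hs0. }
  assert (HP1 : 1.775 <= PI * (1 - r)) by nra.
  assert (Hax : Rabs (alpha * x) <= alpha / 2).
  { rewrite Hal. apply Rabs_le_between. assert (Hpr : 0 < PI * r) by nra.
    assert (0 <= PI * r * (1/2 - x)) by (apply Rmult_le_pos; lra).
    assert (0 <= PI * r * (x + 1/2)) by (apply Rmult_le_pos; lra). split; lra. }
  apply Rabs_le_between in Hax.
  assert (Hzr : tau - alpha / 2 <= z <= tau + alpha / 2).
  { unfold Rmin, Rmax in Hz. destruct (Rle_dec tau t); lra. }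
  assert (Hz0 : 0 < z < PI) by (rewrite Hal in Hzr; unfold tau in Hzr; split; nra).
  assert (HzB : PI / 4 <= z / 2 + PI / 4 <= PI / 2 - 0.22) by (rewrite Hal in Hzr; unfold tau in Hzr; split; lra).
  assert (Htl : 0.4437 <= t) by (assert (tau = PI / 4) by reflexivity; lra).
  set (m := (N + 2)%nat).
  assert (Hm5 : (5 <= m)%nat) by (unfold m; lia).
  replace (S (2 * N + 3)) with (2 * m)%nat by (unfold m; lia).
  replace (2 * N + 4)%nat with (2 * m)%nat by (unfold m; lia). fold m.
  assert (HTB := TB (2 * m) (z / 2) (PI / 4) ltac:(lra) ltac:(lra) ltac:(lra)).
  assert (Htan := tan_bound5 (z / 2 + PI / 4) (proj1 HzB) (proj2 HzB)).
  assert (HMD := MD (2 * m) z Hz0).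
  assert (Hgb : Rabs (gb (2 * m) z) = Rabs (D (2 * m) z)).
  { unfold gb, D. rewrite Rabs_mult, pow_1_abs. ring. }
  set (n := (2 * m)%nat) in *.
  set (X := x ^ 2).
  assert (HX : 0 <= X) by (unfold X; nra).
  set (Z := (2 / 3 * X) ^ m).
  assert (HZ : 0 <= Z) by (unfold Z; apply pow_le; lra).
  assert (HRHS : 23 / 10 * (2 / 3) ^ m * x ^ n = 23 / 10 * Z).
  { unfold Z, n, X. rewrite Rpow_mult_distr, pow_mult. ring. }
  rewrite HRHS.
  assert (Hfn : 0 < INR (fact n)) by apply lt_0_INR, lt_O_fact.
  assert (Hq : 2 * / 2 ^ S n = / 4 ^ m).
  { unfold n. change (2 ^ S (2 * m)) with (2 * 2 ^ (2 * m)). rewrite pow_mult. replace (2 ^ 2) with 4 by ring.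
    assert (4 ^ m <> 0) by (apply pow_nonzero; lra). field. auto. }
  assert (HE0 : 0 <= ev n (tan (z / 2))) by (apply E_nonneg; exact Hz0).
  assert (Hgbb : Rabs (gb n z) <= / 4 ^ m * (INR (fact n) * 5 / (PI / 4) ^ n)).
  { rewrite Hgb, <- Hq. eapply Rle_trans. exact HMD.
    apply Rmult_le_compat_l. assert (0 < / 2 ^ S n) by (apply Rinv_0_lt_compat, pow_lt; lra). lra.
    eapply Rle_trans. exact HTB.
    assert (0 < (PI / 4) ^ n) by (apply pow_lt; lra).
    unfold Rdiv. apply Rmult_le_compat_r. left; apply Rinv_0_lt_compat; lra.
    apply Rmult_le_compat_l; lra. }
  assert (Hsq1 : (t - tau) ^ 2 * / 4 * / (PI / 4) ^ 2 = / 4 * (2 / 3 * X)).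
  { rewrite Htx. unfold X. replace ((alpha * x) ^ 2) with (alpha ^ 2 * x ^ 2) by ring. rewrite Hal2. field. lra. }
  assert (Hsq2 : ((tau - t) / tau) ^ 2 = 2 / 3 * X).
  { replace (tau - t) with (- (alpha * x)) by lra. unfold tau, X.
    replace ((- (alpha * x) / (PI / 4)) ^ 2) with (alpha ^ 2 * x ^ 2 * 16 / PI ^ 2) by (field; lra).
    rewrite Hal2. field. lra. }
  assert (HT1 : Rabs ((t - tau) ^ n / INR (fact n) * gb n z) <= 5 * (/ 4) ^ m * Z).
  { rewrite Rabs_mult. unfold n. rewrite pow_mult.
    assert (Hp : 0 <= ((t - tau) ^ 2) ^ m) by (apply pow_le; nra).
    rewrite (Rabs_right (((t - tau) ^ 2) ^ m / INR (fact (2 * m)))).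
    2:{ apply Rle_ge. apply Rdiv_le_0_compat; assumption. }
    eapply Rle_trans. apply Rmult_le_compat_l. apply Rdiv_le_0_compat; assumption. exact Hgbb.
    replace (((t - tau) ^ 2) ^ m / INR (fact (2 * m)) * (/ 4 ^ m * (INR (fact n) * 5 / (PI / 4) ^ n)))
      with (5 * (((t - tau) ^ 2) ^ m * (/ 4) ^ m * (/ (PI / 4) ^ 2) ^ m)).
    2:{ unfold n. rewrite pow_mult, !pow_inv. field. assert (0 < 4 ^ m) by (apply pow_lt; lra).
        assert (0 < ((PI / 4) ^ 2) ^ m) by (apply pow_lt; apply pow_lt; lra). split; [lra|split; [lra|apply INR_fact_neq_0]]. }
    rewrite <- !Rpow_mult_distr, Hsq1. unfold Z. rewrite Rpow_mult_distr. lra. }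
  assert (HT2 : Rabs (((tau - t) / tau) ^ n / t) <= Z / 0.4437).
  { unfold n. rewrite pow_mult, Hsq2. fold Z. rewrite Rabs_right.
    2:{ apply Rle_ge. apply Rdiv_le_0_compat; lra. }
    unfold Rdiv. apply Rmult_le_compat_l; [lra|]. apply Rinv_le_contravar; lra. }
  assert (H4 : (/ 4) ^ m <= (/ 4) ^ 5) by (apply pow_ge_small; [lra|exact Hm5]).
  assert (H45 : (/ 4) ^ 5 = / 1024) by field.
  eapply Rle_trans. apply Rabs_triang.
  assert (5 * (/ 4) ^ m * Z <= 5 / 1024 * Z) by nra.
  assert (Z / 0.4437 <= 2.2538 * Z) by (unfold Rdiv; nra).
  lra.
Qed.
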